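(* Let $\vec B=(b_0,\dots,b_{N-1})$ be a binary digit vector with cumulative digit function $g$. Let $x\in(0,1)$ and write $x=\sum_{i=1}^\infty n_i N^{-i}$ with $n_i\in\{0,1,\dots,N-1\}$. Then $$F_{\vec B}(x)=\sum_{i=1}^\infty\Big(\prod_{k=1}^{i-1}b_{n_k}\Big)\frac{g(n_i)}{\|\vec B\|^i}.$$
   Context: A binary digit vector of length (scale factor) $N\ge3$ is $\vec B=(b_0,\dots,b_{N-1})\in\{0,1\}^N$ with $2\le\|\vec B\|:=\sum_i b_i\le N-1$; its digit set is $D=\{i:b_i=1\}$. With $\phi_d(x)=(x+d)/N$ for $d\in D$, let $\mu_{\vec B}$ be the unique Borel probability measure with $\mu_{\vec B}=\frac{1}{\|\vec B\|}\sum_{d\in D}\mu_{\vec B}\circ\phi_d^{-1}$, supported on the attractor $C_{\vec B}\subset[0,1]$. The CDF is $F_{\vec B}(x)=\mu_{\vec B}([0,x])$. The cumulative digit function is $g(0)=0$, $g(i)=\sum_{j=0}^{i-1}b_j$ for $1\le i\le N$. An empty product equals $1$. *)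

(* Defs.v *)
From HB Require Import structures.
From mathcomp Require Import all_boot all_order all_algebra.
From mathcomp Require Export all_classical all_reals all_analysis.
Set Implicit Arguments. Unset Strict Implicit. Unset Printing Implicit Defensive.
Import Order.TTheory GRing.Theory Num.Theory.
Local Open Scope ring_scope.
Local Open Scope classical_set_scope.

Definition bnorm (N : nat) (b : 'I_N -> bool) : nat := (\sum_(i < N) b i)%N.

Definition gcum (N : nat) (b : 'I_N -> bool) (i : nat) : nat :=
  (\sum_(j < N | (j < i)%N) b j)%N.

Definition is_digit_vector (N : nat) (b : 'I_N -> bool) : Prop :=
  (3 <= N)%N /\ (2 <= bnorm b)%N /\ (bnorm b <= N.-1)%N.

Definition phi_d {R : realType} (N d : nat) (x : R) : R := (x + d%:R) / N%:R.

Definition self_similar {R : realType} (N : nat) (b : 'I_N -> bool)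
  (mu : set R -> \bar R) : Prop :=
  forall A : set R, measurable A ->
    mu A = (((bnorm b)%:R^-1)%:E *
           (\sum_(d < N | b d) mu (@phi_d R N d @^-1` A)))%E.

(* Main.v *)
Require Import Defs.
From HB Require Import structures.
From mathcomp Require Import all_boot all_order all_algebra.
From mathcomp Require Import all_classical all_reals all_analysis.
From mathcomp Require Import lra zify ring.
Import Order.TTheory GRing.Theory Num.Theory numFieldNormedType.Exports.
Local Open Scope ring_scope.
Local Open Scope classical_set_scope.
Set Implicit Arguments. Unset Strict Implicit. Unset Printing Implicit Defensive.

Definition nu (R : realType) (mu : probability R R) (A : set R) : R := fine (mu A).

Lemma nuE (R : realType) (mu : probability R R) (A : set R) :
  measurable A -> mu A = (nu mu A)%:E.
Proof. by move=> mA; rewrite /nu fineK // fin_num_measure. Qed.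

Lemma nu_ge0 (R : realType) (mu : probability R R) (A : set R) : 0 <= nu mu A.
Proof. by rewrite /nu fine_ge0. Qed.

Lemma nu_le1 (R : realType) (mu : probability R R) (A : set R) :
  measurable A -> nu mu A <= 1.
Proof. by move=> mA; rewrite -lee_fin -nuE // probability_le1. Qed.

Lemma le_nu (R : realType) (mu : probability R R) (A B : set R) :
  measurable A -> measurable B -> A `<=` B -> nu mu A <= nu mu B.
Proof. by move=> mA mB AB; rewrite -lee_fin -!nuE // le_measure // inE. Qed.

Lemma nu_ss (R : realType) (N : nat) (b : 'I_N -> bool) (mu : probability R R)
  (hmu : self_similar b mu) (A : set R) :
  measurable A -> (forall d : 'I_N, measurable (@phi_d R N d @^-1` A)) ->
  nu mu A = (bnorm b)%:R^-1 * \sum_(d < N | b d) nu mu (@phi_d R N d @^-1` A).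
Proof.
move=> mA mP; apply/eqP; rewrite -eqe -nuE // hmu // EFinM; apply/eqP; congr (_ * _)%E.
rewrite -sumEFin; apply: eq_bigr => d _; exact: nuE.
Qed.


Definition G (R : realType) (mu : probability R R) (t : R) : R := nu mu `]-oo, t].

Lemma preim_phi (R : realType) (N d : nat) (t : R) : (0 < N)%N ->
  @phi_d R N d @^-1` `]-oo, t] = `]-oo, N%:R * t - d%:R].
Proof.
move=> N0; apply/seteqP; split => y; rewrite /= !in_itv /= /phi_d.
  by rewrite ler_pdivrMr ?ltr0n // lerBrDr mulrC.
by rewrite ler_pdivrMr ?ltr0n // lerBrDr mulrC.
Qed.

Lemma sumb_const (R : realType) (N : nat) (b : 'I_N -> bool) (c : R) :
  \sum_(d < N | b d) c = (bnorm b)%:R * c.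
Proof.
rewrite /bnorm natr_sum mulr_suml big_mkcond; apply: eq_bigr => i _.
by case: (b i); rewrite ?mul1r ?mul0r.
Qed.

Lemma G_eq (R : realType) (N : nat) (b : 'I_N -> bool) (mu : probability R R)
  (hmu : self_similar b mu) (t : R) : (0 < N)%N ->
  G mu t = (bnorm b)%:R^-1 * \sum_(d < N | b d) G mu (N%:R * t - d%:R).
Proof.
move=> N0; rewrite /G (nu_ss hmu); last 2 first.
- exact: measurable_itv.
- by move=> d; rewrite preim_phi //; exact: measurable_itv.
by congr (_ * _); apply: eq_bigr => d _; rewrite preim_phi.
Qed.

Lemma le_G (R : realType) (mu : probability R R) (s t : R) : s <= t -> G mu s <= G mu t.
Proof.
move=> st; apply: le_nu; try exact: measurable_itv.
by move=> y /=; rewrite !in_itv /= => /le_trans; apply.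
Qed.

Lemma G_ge0 (R : realType) (mu : probability R R) t : 0 <= G mu t.
Proof. exact: nu_ge0. Qed.

Lemma G_le1 (R : realType) (mu : probability R R) t : G mu t <= 1.
Proof. by apply: nu_le1; exact: measurable_itv. Qed.

Lemma exists_other (N : nat) (b : 'I_N -> bool) (i0 : 'I_N) :
  (2 <= bnorm b)%N -> exists d, b d && (d != i0).
Proof.
move=> h2; case: (boolP [exists d, b d && (d != i0)]) => [/existsP//|/existsPn H].
move: h2; rewrite /bnorm (bigD1 i0) //= big1; first by case: (b i0).
by move=> i /negbTE ni; have := H i; rewrite ni andbT => /negbTE ->.
Qed.


Lemma sum_le_other (R : realType) (N : nat) (b : 'I_N -> bool) (f : 'I_N -> R)
  (c c' : R) (ds : 'I_N) : b ds ->
  (forall d, b d -> f d <= c) -> f ds <= c' ->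
  \sum_(d < N | b d) f d <= c' - c + (bnorm b)%:R * c.
Proof.
move=> bds hc hc'; rewrite -sumb_const (bigD1 ds) //= [X in _ <= _ + X](bigD1 ds) //=.
rewrite addrA addrNK lerD // ler_sum // => d /andP[bd _]; exact: hc.
Qed.

Lemma sum_ge_other (R : realType) (N : nat) (b : 'I_N -> bool) (f : 'I_N -> R)
  (c c' : R) (ds : 'I_N) : b ds ->
  (forall d, b d -> c <= f d) -> c' <= f ds ->
  c' - c + (bnorm b)%:R * c <= \sum_(d < N | b d) f d.
Proof.
move=> bds hc hc'; rewrite -sumb_const [in X in X <= _](bigD1 ds) //= [in X in _ <= X](bigD1 ds) //=.
rewrite addrA addrNK lerD // ler_sum // => d /andP[bd _]; exact: hc.
Qed.

Lemma G_shiftN (R : realType) (N : nat) (b : 'I_N -> bool) (mu : probability R R)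
  (hB : is_digit_vector b) (hmu : self_similar b mu) (t : R) :
  t <= 0 -> G mu t = G mu (t - 1).
Proof.
case: hB => N3 [m2 _] t0.
have N0 : (0 < N)%N by lia.
have m0 : 0 < (bnorm b)%:R :> R by rewrite ltr0n; lia.
apply/eqP; rewrite eq_le [X in _ && X](_ : _ = true) ?andbT; last by apply: le_G; lra.
have [ds /andP[bds nds]] := exists_other (Ordinal N0) m2.
have hN : 1 <= N%:R :> R by rewrite ler1n; lia.
have H1 : forall d : 'I_N, b d -> G mu (N%:R * t - d%:R) <= G mu t.
  move=> d _; apply: le_G; have : 0 <= d%:R :> R by [].
  have : (N%:R - 1) * t <= 0 by apply: mulr_ge0_le0; lra.
  lra.
have H2 : G mu (N%:R * t - ds%:R) <= G mu (t - 1).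
  apply: le_G; have : 1 <= ds%:R :> R.
    by rewrite ler1n lt0n; apply: contraNneq nds => h; apply/eqP; exact: val_inj.
  have : (N%:R - 1) * t <= 0 by apply: mulr_ge0_le0; lra.
  lra.
have H : \sum_(d < N | b d) G mu (N%:R * t - d%:R) <= G mu (t-1) - G mu t + (bnorm b)%:R * G mu t.
  exact: (sum_le_other (f := fun d => G mu (N%:R * t - d%:R)) bds H1 H2).
have E : \sum_(d < N | b d) G mu (N%:R * t - d%:R) = (bnorm b)%:R * G mu t.
  by rewrite (G_eq hmu t N0) mulVKf ?gt_eqF.
rewrite E in H; lra.
Qed.


Lemma G_shiftP (R : realType) (N : nat) (b : 'I_N -> bool) (mu : probability R R)
  (hB : is_digit_vector b) (hmu : self_similar b mu) (t : R) :
  1 <= t -> G mu t = G mu (t + 1).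
Proof.
case: hB => N3 [m2 _] t1.
have N0 : (0 < N)%N by lia.
have NN : (N.-1 < N)%N by lia.
have m0 : 0 < (bnorm b)%:R :> R by rewrite ltr0n; lia.
apply/eqP; rewrite eq_le [X in X && _](_ : _ = true) //; last by apply: le_G; lra.
have [ds /andP[bds nds]] := exists_other (Ordinal NN) m2.
have hN : 1 <= N%:R :> R by rewrite ler1n; lia.
have H1 : forall d : 'I_N, b d -> G mu t <= G mu (N%:R * t - d%:R).
  move=> d _; apply: le_G.
  have : d%:R + 1 <= N%:R :> R by rewrite natr1 ler_nat; exact: ltn_ord d.
  have : (N%:R - 1) * (t - 1) >= 0 by apply: mulr_ge0; lra.
  lra.
have H2 : G mu (t + 1) <= G mu (N%:R * t - ds%:R).
  apply: le_G; have : ds%:R + 2 <= N%:R :> R.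
    rewrite -[2]/(2%:R) -natrD ler_nat; have := ltn_ord ds.
    have : (nat_of_ord ds) != N.-1 by apply: contraNneq nds => h; apply/eqP; exact: val_inj.
    move=> /eqP h1 h2; lia.
  have : (N%:R - 1) * (t - 1) >= 0 by apply: mulr_ge0; lra.
  lra.
have H : G mu (t + 1) - G mu t + (bnorm b)%:R * G mu t <= \sum_(d < N | b d) G mu (N%:R * t - d%:R).
  exact: (sum_ge_other (f := fun d => G mu (N%:R * t - d%:R)) bds H1 H2).
have E : \sum_(d < N | b d) G mu (N%:R * t - d%:R) = (bnorm b)%:R * G mu t.
  by rewrite (G_eq hmu t N0) mulVKf ?gt_eqF.
rewrite E in H; lra.
Qed.


Lemma G0 (R : realType) (N : nat) (b : 'I_N -> bool) (mu : probability R R)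
  (hB : is_digit_vector b) (hmu : self_similar b mu) : G mu 0 = 0.
Proof.
have Gk : forall k : nat, G mu (- k%:R) = G mu 0.
  elim => [|k IH]; first by rewrite oppr0.
  rewrite -IH [RHS](G_shiftN hB hmu); last by rewrite oppr_le0.
  by rewrite -natr1 opprD.
pose F k : set R := `]-oo, - k%:R].
have mF : forall k, measurable (F k) by move=> k; exact: measurable_itv.
have E : \bigcap_k F k = set0.
  apply/seteqP; split => // y /= H.
  have := H (Num.Def.archi_bound `|y|) I; rewrite /F /= in_itv /=.
  have := archi_boundP (normr_ge0 y); have : - y <= `|y| by rewrite -normrN ler_norm.
  lra.
have := @nonincreasing_cvg_mu _ _ _ mu F.
rewrite E measure0 => /(_ _ mF _ _).
have -> : mu \o F = fun=> mu (F 0%N).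
  by apply: funext => k /=; rewrite !nuE //; congr (_%:E); have := Gk k; have := Gk 0%N; rewrite /G /F => -> ->.
move=> /(_ _ _ _)/cvg_lim => H.
have {}H := H (@ereal_hausdorff R).
rewrite lim_cst in H; last exact: ereal_hausdorff.
rewrite /G -[0 in LHS]oppr0 -/(F 0%N) /nu H //.
- by rewrite (le_lt_trans (probability_le1 _ _)) ?ltry.
- move=> i j ij; rewrite subsetEset => y; rewrite /F /= !in_itv /= => /le_trans; apply.
  by rewrite lerN2 ler_nat.
Qed.

Lemma G1 (R : realType) (N : nat) (b : 'I_N -> bool) (mu : probability R R)
  (hB : is_digit_vector b) (hmu : self_similar b mu) : G mu 1 = 1.
Proof.
have Gk : forall k : nat, G mu (1 + k%:R) = G mu 1.
  elim => [|k IH]; first by rewrite addr0.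
  rewrite -IH [RHS](G_shiftP hB hmu); last by rewrite lerDl.
  by rewrite -natr1 addrA.
pose F k : set R := `]-oo, 1 + k%:R].
have mF : forall k, measurable (F k) by move=> k; exact: measurable_itv.
have E : \bigcup_k F k = setT.
  apply/seteqP; split => // y _.
  exists (Num.Def.archi_bound `|y|) => //; rewrite /F /= in_itv /=.
  have := archi_boundP (normr_ge0 y); have : y <= `|y| by rewrite ler_norm.
  lra.
have := @nondecreasing_cvg_mu _ _ _ mu F.
rewrite E => /(_ mF _ _).
have -> : mu \o F = fun=> mu (F 0%N).
  by apply: funext => k /=; rewrite !nuE //; congr (_%:E); have := Gk k; have := Gk 0%N; rewrite /G /F => -> ->.
move=> /(_ _ _)/cvg_lim => H.
have {}H := H (@ereal_hausdorff R).
rewrite lim_cst in H; last exact: ereal_hausdorff.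
have h1 : G mu 1 = G mu (1 + 0%:R) by rewrite addr0.
rewrite h1 /G -/(F 0%N) /nu H //.
- exact: (congr1 fine (probability_setT mu)).
- move=> i j ij; rewrite subsetEset => y; rewrite /F /= !in_itv /= => /le_trans; apply.
  by rewrite lerD2l ler_nat.
Qed.


Lemma G_le0 (R : realType) (N : nat) (b : 'I_N -> bool) (mu : probability R R)
  (hB : is_digit_vector b) (hmu : self_similar b mu) t : t <= 0 -> G mu t = 0.
Proof.
move=> t0; apply/eqP; rewrite eq_le G_ge0 andbT -(G0 hB hmu); exact: le_G.
Qed.

Lemma G_ge1 (R : realType) (N : nat) (b : 'I_N -> bool) (mu : probability R R)
  (hB : is_digit_vector b) (hmu : self_similar b mu) t : 1 <= t -> G mu t = 1.
Proof.
move=> t1; apply/eqP; rewrite eq_le G_le1 /= -{1}(G1 hB hmu); exact: le_G.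
Qed.

Lemma nu_itv (R : realType) (N : nat) (b : 'I_N -> bool) (mu : probability R R)
  (hB : is_digit_vector b) (hmu : self_similar b mu) x : 0 <= x ->
  nu mu `[0, x] = G mu x.
Proof.
move=> x0.
have U : `]-oo, x] = `]-oo, 0[ `|` `[0, x] :> set R.
  apply/seteqP; split => y /=; rewrite !in_itv /=.
    by move=> yx; case: (ltP y 0) => y0; [left | right]; rewrite /= ?in_itv /= ?y0 ?yx.
  by case=> H; move: H; rewrite /= ?in_itv /=; [lra | case/andP].
have D : `]-oo, 0[ `&` `[0, x] = set0 :> set R.
  apply/seteqP; split => y //=; rewrite !in_itv /= => -[y0 /andP[y0' _]]; lra.
have H : G mu x = nu mu `]-oo, 0[ + nu mu `[0, x].
  apply/eqP; rewrite -eqe EFinD /G -!nuE; try exact: measurable_itv.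
  rewrite U; apply/eqP; exact: (measureU mu (measurable_itv _) (measurable_itv _) D).
have Z : nu mu `]-oo, 0[ = 0.
  apply/eqP; rewrite eq_le nu_ge0 andbT -[X in _ <= X](G0 hB hmu); apply: le_nu; try exact: measurable_itv.
  by move=> y /=; rewrite !in_itv /=; apply: ltW.
by rewrite H Z add0r.
Qed.

Lemma gcumE (N : nat) (R : realType) (b : 'I_N -> bool) (j : nat) :
  (gcum b j)%:R = \sum_(d < N) ((b d && (d < j)%N)%:R : R).
Proof.
rewrite /gcum natr_sum big_mkcond; apply: eq_bigr => d _.
by case: (b d); case: ltnP.
Qed.

Lemma G_step (R : realType) (N : nat) (b : 'I_N -> bool) (mu : probability R R)
  (hB : is_digit_vector b) (hmu : self_similar b mu) (t : R) (j : 'I_N) :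
  j%:R <= N%:R * t <= j%:R + 1 ->
  G mu t = (bnorm b)%:R^-1 * ((gcum b j)%:R + (b j)%:R * G mu (N%:R * t - j%:R)).
Proof.
move=> /andP[h1 h2].
have N0 : (0 < N)%N by case: hB => ? _; lia.
rewrite (G_eq hmu t N0); congr (_ * _).
rewrite gcumE big_mkcond [in LHS](bigD1 j) //= [in RHS](bigD1 j) //= ltnn andbF add0r [RHS]addrC.
congr (_ + _); first by case: (b j); rewrite ?mul1r ?mul0r.
apply: eq_bigr => d dj.
case: ltnP => dj'.
- rewrite andbT (G_ge1 hB hmu); first by case: (b d).
  have : d%:R + 1 <= j%:R :> R by rewrite natr1 ler_nat.
  lra.
- rewrite andbF (G_le0 hB hmu); first by case: (b d).
  have : j%:R + 1 <= d%:R :> R.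
    by rewrite natr1 ler_nat ltn_neqAle dj' andbT eq_sym.
  lra.
Qed.


Definition useq (R : realType) (N : nat) (n : nat -> 'I_N) : R^nat :=
  fun k => if (k == 0)%N then 0 else (n k)%:R / N%:R ^+ k.
Arguments useq : clear implicits.

Definition aseq (R : realType) (N : nat) (n : nat -> 'I_N) (k : nat) : R :=
  series (useq R N n) k.+1.
Arguments aseq : clear implicits.

Lemma useq_ge0 (R : realType) (N : nat) (n : nat -> 'I_N) k : 0 <= useq R N n k.
Proof. by rewrite /useq; case: eqP => // _; rewrite divr_ge0 // exprn_ge0. Qed.

Lemma useqS (R : realType) (N : nat) (n : nat -> 'I_N) k :
  useq R N n k.+1 = (n k.+1)%:R * N%:R^-1 ^+ k.+1.
Proof. by rewrite /useq /= exprVn. Qed.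

Lemma series_mono (R : realType) (N : nat) (n : nat -> 'I_N) i j : (i <= j)%N ->
  series (useq R N n) i <= series (useq R N n) j.
Proof.
move=> ij; rewrite -(subnK ij); elim: (j - i)%N => [|l IH]; first by rewrite add0n.
by rewrite addSn seriesSr (le_trans IH) // lerDl useq_ge0.
Qed.

Lemma a_le_x (R : realType) (N : nat) (n : nat -> 'I_N) (x : R)
  (hn : series (useq R N n) @ \oo --> x) k : aseq R N n k <= x.
Proof.
apply: (cvgr_to_ge hn); exists k.+1 => // j /= hj; exact: series_mono.
Qed.

Lemma series_bound (R : realType) (N : nat) (n : nat -> 'I_N) k l : (0 < N)%N ->
  series (useq R N n) (k.+1 + l)%N <= aseq R N n k + N%:R^-1 ^+ k - N%:R^-1 ^+ (k + l)%N.
Proof.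
move=> N0; elim: l => [|l IH]; first by rewrite !addn0 /aseq addrK.
rewrite addnS seriesSr (le_trans (lerD IH (lexx _))) // addSn useqS.
have hn : (n (k + l)%N.+1)%:R <= N%:R - 1 :> R.
  by have := ltn_ord (n (k + l)%N.+1); rewrite -(ler_nat R) -natr1 => ?; lra.
have q1 : N%:R * N%:R^-1 = 1 :> R by rewrite mulfV // pnatr_eq0 -lt0n.
have hq : 0 <= N%:R^-1 ^+ (k + l)%N.+1 :> R by rewrite exprn_ge0 // invr_ge0.
have E : N%:R^-1 ^+ (k + l)%N = N%:R * N%:R^-1 ^+ (k + l)%N.+1 :> R.
  by rewrite exprS mulrA q1 mul1r.
rewrite addnS E.
have := ler_wpM2r hq hn; rewrite mulrBl mul1r; lra.
Qed.

Lemma x_le (R : realType) (N : nat) (n : nat -> 'I_N) (x : R) (N0 : (0 < N)%N)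
  (hn : series (useq R N n) @ \oo --> x) k : x <= aseq R N n k + N%:R^-1 ^+ k.
Proof.
apply: (cvgr_to_le hn); exists k.+1 => // j /= hj.
rewrite -(subnKC hj); have := @series_bound R N n k (j - k.+1)%N N0.
have : 0 <= N%:R^-1 ^+ (k + (j - k.+1))%N :> R by rewrite exprn_ge0 // invr_ge0.
lra.
Qed.

Definition rseq (R : realType) (N : nat) (n : nat -> 'I_N) (x : R) (k : nat) : R :=
  N%:R ^+ k * (x - aseq R N n k).
Arguments rseq : clear implicits.

Lemma rseq0 (R : realType) (N : nat) (n : nat -> 'I_N) (x : R) : rseq R N n x 0 = x.
Proof.
by rewrite /rseq /aseq seriesSr /useq /= expr0 mul1r /series /= big_geq // add0r subr0.
Qed.

Lemma rseq_bound (R : realType) (N : nat) (n : nat -> 'I_N) (x : R) (N0 : (0 < N)%N)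
  (hn : series (useq R N n) @ \oo --> x) k : 0 <= rseq R N n x k <= 1.
Proof.
have h1 := a_le_x hn k; have h2 := x_le N0 hn k.
have Np : 0 < N%:R ^+ k :> R by rewrite exprn_gt0 // ltr0n.
have h : N%:R ^+ k * N%:R^-1 ^+ k = 1 :> R.
  by rewrite -exprMn mulfV ?expr1n // pnatr_eq0 -lt0n.
rewrite /rseq mulr_ge0 ?subr_ge0 ?(ltW Np) //=.
rewrite -[X in _ <= X]h ler_pM2l //; lra.
Qed.

Lemma rseq_step (R : realType) (N : nat) (n : nat -> 'I_N) (x : R) (N0 : (0 < N)%N) k :
  N%:R * rseq R N n x k = rseq R N n x k.+1 + (n k.+1)%:R.
Proof.
rewrite /rseq /aseq [series _ k.+2]seriesSr useqS !exprS.
set a := series _ k.+1; set q := N%:R^-1; set c := (n k.+1)%:R.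
have h : N%:R * N%:R ^+ k * (q * q ^+ k) = 1 :> R.
  by rewrite mulrACA -exprMn /q mulfV ?expr1n ?mulr1 // pnatr_eq0 -lt0n.
transitivity (N%:R * N%:R ^+ k * (x - (a + c * (q * q ^+ k))) + c * (N%:R * N%:R ^+ k * (q * q ^+ k))).
  by ring.
by rewrite h mulr1 mulrA.
Qed.


Theorem proposition2p3 (R : realType) (N : nat) (b : 'I_N -> bool)
  (mu : probability R R)
  (hB : is_digit_vector b)
  (hmu : self_similar b mu)
  (x : R) (hx0 : 0 < x) (hx1 : x < 1)
  (n : nat -> 'I_N)
  (hn : ([series (if (k == 0)%N then 0 else (n k)%:R / N%:R ^+ k)]_k : R^nat)
          @ \oo --> x) :
  ([series (if (i == 0)%N then 0 else
       (\prod_(1 <= k < i) ((b (n k))%:R : R)) * (gcum b (n i))%:R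
         / (bnorm b)%:R ^+ i)]_i : R^nat)
    @ \oo --> fine (mu `[0, x]).
Proof.
have N0 : (0 < N)%N by case: hB => ? _; lia.
have m2 : 2 <= (bnorm b)%:R :> R by case: hB => _ [? _]; rewrite ler_nat.
have hn' : series (useq R N n) @ \oo --> x := hn.
set v := (fun i => _ : R).
pose P k := \prod_(1 <= i < k) ((b (n i))%:R : R).
pose q := (bnorm b)%:R^-1 : R.
have vS : forall k, v k.+1 = P k.+1 * (gcum b (n k.+1))%:R * q ^+ k.+1.
  by move=> k; rewrite /v /q /= exprVn.
have PS : forall k, P k.+2 = P k.+1 * (b (n k.+1))%:R.
  by move=> k; rewrite /P big_nat_recr.
have claim : forall k, G mu x = series v k.+1 + P k.+1 * q ^+ k * G mu (rseq R N n x k).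
  elim => [|k IH].
    by rewrite seriesSr /series /= big_geq // /v /= /P big_geq // expr0 !mul1r rseq0 !add0r.
  rewrite IH [series v k.+2]seriesSr vS PS.
  have st := rseq_step n x N0 k.
  have rb := rseq_bound N0 hn' k.+1.
  rewrite (G_step hB hmu (j := n k.+1)); last first.
    by rewrite st; apply/andP; split; lra.
  rewrite st addrK -/q exprS; ring.
have hq : `|q| < 1.
  rewrite ger0_norm ?invr_ge0 ?ler0n // invf_lt1; lra.
have q0 : 0 <= q by rewrite invr_ge0 ler0n.
change (fine (mu `[0, x])) with (nu mu `[0, x]).
rewrite (nu_itv hB hmu (ltW hx0)) -cvg_shiftS.
apply: (@squeeze_cvgr _ _ _ _ (fun k => G mu x - q ^+ k) (fun k => G mu x + q ^+ k)).
- exists 0%N => // k _ /=.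
  have := claim k.
  have P01 : 0 <= P k.+1 <= 1.
    by apply/andP; split; [apply: prodr_ge0 | apply: prodr_ile1] => i _; case: (b (n i)); rewrite /= ?ler01 ?lexx.
  have G01 : 0 <= G mu (rseq R N n x k) <= 1 by rewrite G_ge0 G_le1.
  have Q0 : 0 <= q ^+ k by rewrite exprn_ge0.
  set T := P k.+1 * G mu (rseq R N n x k).
  have T01 : 0 <= T <= 1.
    by rewrite /T mulr_ge0 ?mulr_ile1 //; case/andP: P01; case/andP: G01.
  have -> : P k.+1 * q ^+ k * G mu (rseq R N n x k) = q ^+ k * T by rewrite /T; ring.
  move=> E; apply/andP; split; nra.
- have := cvgB (cvg_cst (G mu x)) (cvg_expr hq); rewrite subr0; exact.
- have := cvgD (cvg_cst (G mu x)) (cvg_expr hq); rewrite addr0; exact.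
Qed.
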